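(* A linear functional $H:\underline{\mathcal Z}\to\mathcal Y$ has a formal convolution representation if and only if it has the minimal FMP and is minimally continuous.
   Context: Let $(\mathcal Z,\|\cdot\|)$ and $(\mathcal Y,\|\cdot\|_{\mathcal Y})$ be normed vector spaces over $\mathbb R$ and $\mathcal B=\{z\in\mathcal Z:\|z\|\le1\}$. Let $\mathbb Z_-=\{0,-1,-2,\dots\}$; elements of $\mathcal Z^{\mathbb Z_-}$ are sequences $\underline z=(z_t)_{t\le0}$. For $t\in\mathbb Z_-$, $\delta^t:\mathcal Z\to\mathcal Z^{\mathbb Z_-}$ maps $z$ to the sequence whose entry at time $t$ is $z$ and all other entries are $0$. Standing assumption: $\underline{\mathcal Z}\subseteq\mathcal Z^{\mathbb Z_-}$ is a set such that (a) $\underline{\mathcal Z}$ is convex and $\underline{\mathcal Z}=\{-\underline z:\underline z\in\underline{\mathcal Z}\}$; (b) $\delta^t(\mathcal B)\subseteq\underline{\mathcal Z}$ for all $t\in\mathbb Z_-$; (c) for every $\underline z\in\underline{\mathcal Z}$ and every $J\subseteq\mathbb Z_-$, the sequence $\sum_{t\in J}\delta^t(z_t)$ (equal to $z_t$ at times $t\in J$ and $0$ elsewhere) belongs to $\underline{\mathcal Z}$. A functional $H:\underline{\mathcal Z}\to\mathcal Y$ is linear if it is the restriction of a linear map defined on the linear span of $\underline{\mathcal Z}$. $L(\mathcal Z,\mathcal Y)$ is the space of continuous linear maps $\mathcal Z\to\mathcal Y$. $H$ has a formal convolution representation if there is $\underline\kappa\in L(\mathcal Z,\mathcal Y)^{\mathbb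 Z_-}$ with $H(\underline z)=\lim_{T\to-\infty}\sum_{t=T}^0\kappa_t(z_t)$ for all $\underline z\in\underline{\mathcal Z}$. $H$ is minimally continuous if $H\circ\delta^t:\mathcal B\to\mathcal Y$ is continuous for every $t\in\mathbb Z_-$. $H$ has the minimal fading memory property (minimal FMP) if $H(\sum_{t=T}^0\delta^t(z_t))\to H(\underline z)$ as $T\to-\infty$ for every $\underline z\in\underline{\mathcal Z}$. *)

(* Defs.v *)
(* Time index t in Z_- = {0,-1,-2,...} is encoded
   by n : nat with t = -n; so a sequence (z_t)_{t<=0} is a function nat -> Z. *)
From HB Require Import structures.
From mathcomp Require Import all_boot all_order all_algebra.
From mathcomp Require Import all_classical all_reals all_analysis.
Set Implicit Arguments. Unset Strict Implicit. Unset Printing Implicit Defensive.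
Import Order.TTheory GRing.Theory Num.Theory.
Local Open Scope classical_set_scope.
Local Open Scope ring_scope.

Section Defs.
Context {R : realType} {Z Y : normedModType R}.

Definition unit_ballZ : set Z := [set z | `|z| <= 1].

Definition delta (t : nat) (z : Z) : nat -> Z :=
  fun n => if n == t then z else 0.

(* \sum_{t in J} delta^t(z_t) *)
Definition restrict_seq (J : set nat) (z : nat -> Z) : nat -> Z :=
  fun n => if `[< J n >] then z n else 0.

(* \sum_{t = T}^{0} delta^t(z_t), with T = -N *)
Definition trunc_seq (N : nat) (z : nat -> Z) : nat -> Z :=
  fun n => if (n <= N)%N then z n else 0.

Definition standing_assumption (Zs : set (nat -> Z)) : Prop :=
  [/\ (forall x y (l : R), Zs x -> Zs y -> 0 <= l -> l <= 1 ->
         Zs (l *: x + (1 - l) *: y)),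
      (forall x, Zs x -> Zs (- x)),
      (forall t z, unit_ballZ z -> Zs (delta t z)) &
      (forall z (J : set nat), Zs z -> Zs (restrict_seq J z))].

Definition lin_span (Zs : set (nat -> Z)) : set (nat -> Z) :=
  [set v | exists n (a : 'I_n -> R) (w : 'I_n -> nat -> Z),
             (forall i, Zs (w i)) /\ v = \sum_(i < n) a i *: w i].

Definition linear_on (Zs : set (nat -> Z)) (H : (nat -> Z) -> Y) : Prop :=
  exists L : (nat -> Z) -> Y,
    (forall (a : R) x y, lin_span Zs x -> lin_span Zs y ->
        L (a *: x + y) = a *: L x + L y) /\
    (forall z, Zs z -> H z = L z).

Definition formal_conv_rep (Zs : set (nat -> Z)) (H : (nat -> Z) -> Y) : Prop :=
  exists kappa : nat -> Z -> Y,
    (forall t, (forall (a : R) u v, kappa t (a *: u + v) = a *: kappa t u + kappa t v)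
               /\ continuous (kappa t)) /\
    (forall z, Zs z ->
       (fun N : nat => \sum_(t < N.+1) kappa t (z t)) @ \oo --> H z).

Definition minimally_continuous (H : (nat -> Z) -> Y) : Prop :=
  forall t : nat, {within unit_ballZ, continuous (fun z : Z => H (delta t z))}.

Definition minimal_FMP (Zs : set (nat -> Z)) (H : (nat -> Z) -> Y) : Prop :=
  forall z, Zs z -> (fun N : nat => H (trunc_seq N z)) @ \oo --> H z.

End Defs.

(* Main.v *)
Require Import Defs.
From HB Require Import structures.
From mathcomp Require Import all_boot all_order all_algebra.
From mathcomp Require Import all_classical all_reals all_analysis.
Import Order.TTheory GRing.Theory Num.Theory.
Local Open Scope classical_set_scope.
Local Open Scope ring_scope.

Section Aux.
Context {R : realType} {Z Y : normedModType R}.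

Lemma lin0 (k : Z -> Y) :
  (forall (a : R) u v, k (a *: u + v) = a *: k u + k v) -> k 0 = 0.
Proof.
move=> hk; have := hk (-1) 0 0.
by rewrite scaler0 addr0 scaleN1r addNr.
Qed.

Lemma linD (k : Z -> Y) :
  (forall (a : R) u v, k (a *: u + v) = a *: k u + k v) ->
  forall u v, k (u + v) = k u + k v.
Proof. by move=> hk u v; have := hk 1 u v; rewrite !scale1r. Qed.

Lemma lin_cont (k : Z -> Y) :
  (forall (a : R) u v, k (a *: u + v) = a *: k u + k v) ->
  {within (@unit_ballZ R Z), continuous k} -> continuous k.
Proof.
move=> hk /subspace_continuousP hc.
have B0 : (@unit_ballZ R Z) 0 by rewrite /unit_ballZ /= normr0.
have h0 := hc 0 B0.
have nb : nbhs (0 : Z) (@unit_ballZ R Z).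
  apply/nbhs_norm0P; exists 1; first exact: ltr01.
  by move=> y /= /ltW.
rewrite within_interior in h0; last by [].
move=> x.
have h1 : (fun y => y - x) @ x --> (x - x).
  by apply: cvgB; [exact: cvg_id | exact: cvg_cst].
rewrite subrr in h1.
rewrite lin0 // in h0.
have h2 := cvg_comp _ _ h1 h0.
have h3 : (fun y => k (y - x) + k x) @ x --> 0 + k x.
  by apply: cvgD; [exact: h2 | exact: cvg_cst].
rewrite add0r in h3.
apply: cvg_trans h3.
apply: near_eq_cvg; apply: nearW => y /=.
by rewrite -linD // subrK.
Qed.

End Aux.

Theorem lemma3p3 (R : realType) (Z Y : normedModType R)
  (Zs : set (nat -> Z)) (H : (nat -> Z) -> Y) :
  standing_assumption Zs -> linear_on Zs H ->
  (formal_conv_rep Zs H <-> minimal_FMP Zs H /\ minimally_continuous H).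
Proof.
move=> [Hconv Hneg Hdelta Hrestr] [L [HL HHL]].
have trZ N z : Zs z -> Zs (trunc_seq N z).
  move=> Zz; have -> : trunc_seq N z = restrict_seq [set n | (n <= N)%N] z.
    by apply: funext => n; rewrite /trunc_seq /restrict_seq /= asboolb.
  exact: Hrestr.
split.
- move=> [k [hk hconv]].
  have k0 t : k t 0 = 0 by apply: lin0; exact: (hk t).1.
  have sum_trunc N z M : (N <= M)%N ->
      \sum_(t < M.+1) k t (trunc_seq N z t) = \sum_(t < N.+1) k t (z t).
    move=> NM.
    rewrite -(big_mkord xpredT (fun t => k t (trunc_seq N z t))).
    rewrite -(big_mkord xpredT (fun t => k t (z t))).
    rewrite (@big_cat_nat _ _ _ N.+1) //=.
    rewrite [X in _ + X]big1_seq ?addr0; last first.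
      move=> i /andP[_]; rewrite mem_index_iota => /andP[Ni _].
      by rewrite /trunc_seq leqNgt Ni /= k0.
    by apply: eq_big_nat => i /andP[_ iN]; rewrite /trunc_seq -ltnS iN.
  split.
  + move=> z Zz.
    have e : (fun N => H (trunc_seq N z)) = fun N => \sum_(t < N.+1) k t (z t).
      apply: funext => N.
      have c : (fun M => \sum_(t < M.+1) k t (trunc_seq N z t)) @ \oo
               --> \sum_(t < N.+1) k t (z t).
        apply: cvg_near_cst; exists N => // M /= NM; exact: sum_trunc.
      rewrite -(cvg_lim (@norm_hausdorff _ _) c).
      by rewrite (cvg_lim (@norm_hausdorff _ _) (hconv _ (trZ N z Zz))).
    by rewrite e; exact: hconv.
  + move=> t.
    apply: (@subspace_eq_continuous _ _ _ (k t)); last first.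
      exact: continuous_subspaceT (hk t).2.
    move=> z; rewrite in_setE => Bz.
    have Zd := Hdelta t z Bz.
    have c : (fun M => \sum_(s < M.+1) k s (delta t z s)) @ \oo --> k t z.
      apply: cvg_near_cst; exists t => // M /= tM.
      have tM' : (t < M.+1)%N by [].
      rewrite (bigD1 (Ordinal tM')) //= big1 ?addr0; first by rewrite /delta eqxx.
      move=> i /negbTE ne; rewrite /delta.
      have -> : (nat_of_ord i == t) = false.
        apply/negbTE; apply: contraFN ne => /eqP h; apply/eqP/val_inj => /=.
        exact: h.
      exact: k0.
    rewrite -(cvg_lim (@norm_hausdorff _ _) c).
    by rewrite (cvg_lim (@norm_hausdorff _ _) (hconv _ Zd)).
- move=> [fmp mc].
  pose k t z := L (delta t z).
  have spanZ x : Zs x -> lin_span Zs x.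
    move=> Zx; exists 1%N, (fun=> 1), (fun=> x); split => //.
    by rewrite big_ord1 scale1r.
  have spanD t z : lin_span Zs (delta t z).
    pose c := `|z| + 1.
    have c0 : 0 < c by rewrite /c; apply: (lt_le_trans ltr01); rewrite lerDr.
    exists 1%N, (fun=> c), (fun=> delta t (c^-1 *: z)); split.
      move=> _; apply: Hdelta; rewrite /unit_ballZ /= normrZ normfV.
      rewrite (ger0_norm (ltW c0)) ler_pdivrMl // mulr1 /c lerDl //.
    rewrite big_ord1; apply: funext => n; rewrite /delta /= !fctE.
    case: (n == t); last by rewrite scaler0.
    by rewrite scalerA mulfV ?scale1r // gt_eqF.
  have kl t : forall (a : R) u v, k t (a *: u + v) = a *: k t u + k t v.
    move=> a u v; rewrite /k -HL; try exact: spanD.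
    congr L; apply: funext => n; rewrite /delta /= !fctE.
    by case: (n == t) => //; rewrite scaler0 addr0.
  exists k; split.
  + move=> t; split; first exact: kl.
    apply: lin_cont; first exact: kl.
    have := mc t; apply: subspace_eq_continuous => z; rewrite in_setE => Bz.
    exact: HHL (Hdelta _ _ Bz).
  + move=> z Zz.
    have e : (fun N => \sum_(t < N.+1) k t (z t)) = fun N => H (trunc_seq N z).
      apply: funext => N; rewrite HHL; last exact: trZ.
      elim: N => [|N IH].
        rewrite big_ord1 /k; congr L; apply: funext => n.
        by rewrite /trunc_seq /delta leqn0; case: eqP => [->|].
      rewrite big_ord_recr /= IH /k -[L (trunc_seq N z)]scale1r -HL; last first.
          exact: spanD.
        exact: spanZ (trZ _ _ Zz).
      congr L; apply: funext => n; rewrite /trunc_seq /delta /= !fctE scale1r.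
      rewrite [(n <= N.+1)%N]leq_eqVlt ltnS; case: eqP => [->|_] /=.
        by rewrite ltnn add0r.
      by rewrite addr0.
    by rewrite e; exact: fmp.
Qed.
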